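(* Let $B$ be a positive integer and $a_1,\dots,a_N$ positive integers with $a_i\le B$ for all $i$. Let $b$ be the minimum number of parts in a partition of $\{1,\dots,N\}$ such that $\sum_{i\in P}a_i\le B$ for every part $P$ (the bin packing optimum). Consider the ring grooming instance with $n=N+1$, $c=B$, and list of traffic demands consisting of $2a_j$ copies of the pair $\{j,n\}$ for each $1\le j\le N$. Then its minimum number of ADMs satisfies $m=b+N$.
   Context: Ring grooming. An instance consists of integers $n\ge 2$ (ring size) and $c\ge 1$ (capacity), and a finite list $L$ of unordered pairs $\{j,k\}$ with $j\ne k$, $j,k\in\{1,\dots,n\}$ (repetitions allowed); these are the traffic demands. Let $d_{jk}=d_{kj}$ be the number of times $\{j,k\}$ occurs in $L$ (the traffic matrix; $d_{jj}=0$). Let $C_n$ be the cycle graph on vertices $1,\dots,n$ in cyclic order, with edges $\{l,l+1\}$ for $1\le l<n$ and $\{n,1\}$. A solution uses some finite number $r$ of ''rings'', each a copy of $C_n$ in which every edge has capacity $c$. A routing specifies, for every ring $i$ and every pair $j<k$, nonnegative integers $t^0_{ijk},t^1_{ijk}$: the amounts of $\{j,k\}$-traffic sent on ring $i$ along each of the two arcs of $C_n$ between $j$ and $k$. It is feasible if $\sum_i (t^0_{ijk}+t^1_{ijk})=d_{jk}$ for all $j<k$, and for every ring $i$ and every edge $e$ of $C_n$ the total traffic routed on ring $i$ along arcs containing $e$ is at most $c$. Ring $i$ needs an ADM (add/drop multiplexer) at vertex $j$ iff some traffic with endpoint $j$ is routed on ring $i$. The cost of a routing is the total number of ADMs, i.e.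 the number of pairs (ring $i$, vertex $j$) at which an ADM is needed. $m=m(n,c,L)$ denotes the minimum cost over all feasible routings. *)

(* Defs.v *)
From mathcomp Require Import all_boot.
Set Implicit Arguments. Unset Strict Implicit. Unset Printing Implicit Defensive.

(* Vertices of C_n are 1..n.  Edge l (1 <= l <= n) is {l, l+1}, edge n is {n,1}.
   For a pair j < k, arc "false" (t^0) is the arc j, j+1, ..., k, i.e. it
   contains edges l with j <= l < k; arc "true" (t^1) is the other arc,
   containing exactly the remaining edges. *)

Definition demand (L : seq (nat * nat)) (j k : nat) : nat :=
  count (fun p => (p == (j, k)) || (p == (k, j))) L.

(* A routing on r rings: t i j k s = t^s_{ijk} (only 1 <= j < k <= n and
   i < r are meaningful). *)
Definition routing := nat -> nat -> nat -> bool -> nat.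

Definition arc_has_edge (j k l : nat) (s : bool) : bool :=
  if s then ~~ ((j <= l) && (l < k)) else (j <= l) && (l < k).

Definition load (n : nat) (t : routing) (i l : nat) : nat :=
  \sum_(1 <= j < n.+1) \sum_(j.+1 <= k < n.+1)
     ((if arc_has_edge j k l false then t i j k false else 0) +
      (if arc_has_edge j k l true then t i j k true else 0)).

Definition feasible (n c : nat) (L : seq (nat * nat)) (r : nat) (t : routing) : Prop :=
  (forall j k, 1 <= j -> j < k -> k <= n ->
     \sum_(0 <= i < r) (t i j k false + t i j k true) = demand L j k) /\
  (forall i l, i < r -> 1 <= l -> l <= n -> load n t i l <= c).

Definition needs_adm (n : nat) (t : routing) (i v : nat) : bool :=
  [exists j : 'I_n.+1, exists k : 'I_n.+1,
     [&& 1 <= (j : nat), (j : nat) < k, (v == j) || (v == k)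
       & 0 < t i j k false + t i j k true]].

Definition cost (n r : nat) (t : routing) : nat :=
  \sum_(0 <= i < r) \sum_(1 <= v < n.+1) needs_adm n t i v.

Definition min_ADMs (n c : nat) (L : seq (nat * nat)) (m : nat) : Prop :=
  (exists r (t : routing), feasible n c L r t /\ cost n r t = m) /\
  (forall r (t : routing), feasible n c L r t -> m <= cost n r t).

(* Items are indexed by 'I_N (item j : 'I_N is item j+1 of the paper). *)
Definition binpack_opt (N : nat) (a : 'I_N -> nat) (B b : nat) : Prop :=
  (exists P : {set {set 'I_N}},
     [/\ partition P [set: 'I_N],
         (forall S, S \in P -> \sum_(i in S) a i <= B) & #|P| = b]) /\
  (forall P : {set {set 'I_N}}, partition P [set: 'I_N] ->
     (forall S, S \in P -> \sum_(i in S) a i <= B) -> b <= #|P|).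

Definition reduction_list (N : nat) (a : 'I_N -> nat) : seq (nat * nat) :=
  flatten [seq nseq (2 * a j) ((j : nat).+1, N.+1) | j <- enum 'I_N].

(* Main.v *)
Require Import Defs.
From mathcomp Require Import zify.
From mathcomp Require Import all_boot.
Set Implicit Arguments. Unset Strict Implicit. Unset Printing Implicit Defensive.

Lemma sum_eq_le1 m n c : \sum_(m <= k < n) (k == c) <= 1.
Proof.
rewrite (_ : \sum_(m <= k < n) (k == c) = count (pred1 c) (index_iota m n)).
  by rewrite count_uniq_mem ?leq_b1 // iota_uniq.
by rewrite -sum1_count [RHS]big_mkcond /=; apply: eq_bigr => k _; case: (k == c).
Qed.

Lemma demand_red N (a : 'I_N -> nat) j k : j < k ->
  demand (reduction_list a) j k =
  \sum_(j' < N) ((j == j'.+1) && (k == N.+1)) * (2 * a j').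
Proof.
move=> jk; rewrite /demand /reduction_list count_flatten sumnE big_map big_map.
rewrite big_enum /=; apply: eq_bigr => j' _; rewrite count_nseq /= !xpair_eqE.
congr (_ * _).
have -> : (j'.+1 == k) && (N.+1 == j) = false.
  apply/negbTE/andP => [[/eqP E1 /eqP E2]]; have := ltn_ord j'; lia.
by rewrite orbF eq_sym [N.+1 == _]eq_sym.
Qed.

Lemma load_ge N (t : routing) i l :
  \sum_(j < N) ((if arc_has_edge j.+1 N.+1 l false then t i j.+1 N.+1 false else 0) +
               (if arc_has_edge j.+1 N.+1 l true then t i j.+1 N.+1 true else 0))
  <= load N.+1 t i l.
Proof.
rewrite /load big_nat_recr //=.
apply: leq_trans (leq_addr _ _).
rewrite (big_add1 _ _ 0) /= big_mkord.
apply: leq_sum => j _.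
rewrite big_nat_recr /=; last by have := ltn_ord j; lia.
exact: leq_addl.
Qed.

Lemma sum_ind_card (T : finType) (A : {set T}) (p : pred T) :
  \sum_(j in A) (p j : nat) = #|[set j in A | p j]|.
Proof.
rewrite -sum1_card big_mkcond /= [RHS]big_mkcond /=.
apply: eq_bigr => j _; rewrite inE; by case: (j \in A); case: (p j).
Qed.

Lemma pack N (a : 'I_N -> nat) B r (x : nat -> 'I_N -> nat) (A : {set 'I_N}) :
  (forall j, 0 < a j) ->
  (forall j, j \in A -> \sum_(i < r) x i j = 2 * a j) ->
  (forall i, i < r -> \sum_(j in A) x i j <= 2 * B) ->
  (forall j, j \in A -> a j <= B) ->
  exists f : 'I_N -> 'I_N,
    [/\ forall j, j \in A -> f j \in A,
        forall j0, j0 \in A -> \sum_(j in A | f j == f j0) a j <= B &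
        #|A| + #|f @: A| <= \sum_(i < r) (\sum_(j in A) (0 < x i j) + [exists j in A, 0 < x i j])].
Proof.
move=> Ha; elim: r A => [|r IH] A HA Hload HB.
  have A0 : A = set0.
    apply/setP => j; rewrite inE; apply/negbTE/negP => jA.
    have := HA j jA; rewrite big_ord0; have := Ha j; lia.
  exists id; split => [j|j|]; rewrite ?A0 ?inE //.
  by rewrite imset0 cards0.
set P0 := [set j in A | 0 < x r j].
set F := [set j in P0 | \sum_(i < r) x i j == 0].
set Pp := P0 :\: F.
set A' := A :\: P0.
have inA' j : (j \in A') = (j \in A) && (x r j == 0).
  by rewrite !inE; case: (j \in A); rewrite /= ?andbT // -eqn0Ngt.
have inF j : (j \in F) = [&& j \in A, 0 < x r j & \sum_(i < r) x i j == 0].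
  by rewrite !inE andbA.
have inPp j : (j \in Pp) = [&& j \in A, 0 < x r j & \sum_(i < r) x i j != 0].
  by rewrite !inE; case: (j \in A); case: (0 < x r j); rewrite /= ?andbT.
have HA' : forall j, j \in A' -> \sum_(i < r) x i j = 2 * a j.
  move=> j; rewrite inA' => /andP [jA /eqP xr0].
  by have := HA j jA; rewrite big_ord_recr /= xr0 addn0.
have Hload' : forall i, i < r -> \sum_(j in A') x i j <= 2 * B.
  move=> i ir; apply: leq_trans (Hload i (ltnW ir)).
  by rewrite [X in _ <= X](big_setID P0) /= leq_addl.
have HB' : forall j, j \in A' -> a j <= B.
  by move=> j; rewrite inA' => /andP [/HB].
have [f' [Hf'in Hf'bin Hf'cnt]] := IH A' HA' Hload' HB'.
pose g := fun j : 'I_N => odflt j [pick k in F].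
have HgF : forall j, j \in F -> g j \in F.
  by move=> j jF; rewrite /g; case: pickP => //= /(_ j); rewrite jF.
have Hgg : forall j1 j2, j1 \in F -> j2 \in F -> g j1 = g j2.
  by move=> j1 j2 j1F; rewrite /g; case: pickP => //= /(_ j1); rewrite j1F.
pose f := fun j => if j \in A' then f' j else if j \in F then g j else j.
have fA' j : j \in A' -> f j = f' j by rewrite /f => ->.
have fF j : j \in F -> f j = g j.
  move=> jF; have := jF; rewrite inF => /and3P [jA xr _].
  by rewrite /f inA' jA /= eqn0Ngt xr /= jF.
have fPp j : j \in Pp -> f j = j.
  move=> jP; have := jP; rewrite inPp => /and3P [jA xr s0].
  by rewrite /f inA' inF jA /= eqn0Ngt xr /= (negbTE s0).
have cov j : j \in A -> [|| j \in A', j \in F | j \in Pp].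
  move=> jA; rewrite inA' inF inPp jA /= lt0n.
  by case: (x r j == 0); case: (_ == 0).
have A'nF j : j \in A' -> j \notin F.
  by rewrite inA' inF => /andP [_ /eqP ->]; rewrite /= andbF.
have A'nPp j : j \in A' -> j \notin Pp.
  by rewrite inA' inPp => /andP [_ /eqP ->]; rewrite /= andbF.
have FnPp j : j \in F -> j \notin Pp.
  by rewrite inF inPp => /and3P [_ _ ->]; rewrite /= !andbF.
have A'A j : j \in A' -> j \in A by rewrite inA' => /andP [].
have FA j : j \in F -> j \in A by rewrite inF => /andP [].
have PpA j : j \in Pp -> j \in A by rewrite inPp => /andP [].
have fA'in j : j \in A' -> f j \in A' by move=> jA; rewrite fA' // Hf'in.
have fFin j : j \in F -> f j \in F by move=> jF; rewrite fF // HgF.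
exists f; split.
- move=> j /cov /or3P [jA'|jF|jP].
  + exact: A'A (fA'in _ jA').
  + exact: FA (fFin _ jF).
  + by rewrite fPp // PpA.
- move=> j0 /cov /or3P [j0A'|j0F|j0P].
  + rewrite (eq_bigl (fun j => (j \in A') && (f' j == f' j0))); first exact: Hf'bin.
    move=> j /=; rewrite (fA' j0 j0A').
    case jA': (j \in A').
      by rewrite (A'A _ jA') fA'.
    case jA: (j \in A) => //=.
    apply/negbTE; move: (cov j jA); rewrite jA' /= => /orP [jF|jP].
      rewrite fF //; apply/eqP => E; have := A'nF _ (Hf'in _ j0A').
      by rewrite -E HgF.
    rewrite fPp //; apply/eqP => E; have := A'nPp _ (Hf'in _ j0A').
    by rewrite -E jP.
  + have -> : \sum_(j in A | f j == f j0) a j = \sum_(j in F) a j.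
      apply: eq_bigl => j; rewrite (fF _ j0F).
      case jF: (j \in F).
        by rewrite FA ?jF // fF ?jF // (Hgg j j0) ?jF ?eqxx.
      case jA: (j \in A) => //=.
      apply/negbTE; move: (cov j jA); rewrite jF /= => /orP [jA'|jP].
        rewrite fA' //; apply/eqP => E; have := A'nF _ (Hf'in _ jA').
        by rewrite E HgF.
      rewrite fPp //; apply/eqP => E; move: jF; rewrite E HgF //.
    have FsubA : F \subset A by apply/subsetP => j /FA.
    have := Hload r (ltnSn r).
    rewrite (big_setID F) /= (setIidPr FsubA).
    have -> : \sum_(j in F) x r j = 2 * \sum_(j in F) a j.
      rewrite big_distrr /=; apply: eq_bigr => j jF.
      have := HA j (FA _ jF); rewrite big_ord_recr /=.
      by move: jF; rewrite inF => /and3P [_ _ /eqP ->].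
    move=> H; rewrite -(leq_pmul2l (isT : 0 < 2)); exact: leq_trans (leq_addr _ _) H.
  + have -> : \sum_(j in A | f j == f j0) a j = \sum_(j | j == j0) a j.
      apply: eq_bigl => j; rewrite (fPp _ j0P).
      case jP: (j \in Pp).
        by rewrite PpA // fPp.
      have -> : (j == j0) = false by apply/negbTE/eqP => E; move: jP; rewrite E j0P.
      case jA: (j \in A) => //=.
      apply/negbTE/eqP => E; move: (cov j jA); rewrite jP orbF => /orP [jA'|jF].
        by have := A'nPp _ (fA'in _ jA'); rewrite E j0P.
      by have := FnPp _ (fFin _ jF); rewrite E j0P.
    rewrite big_pred1_eq; exact: HB (PpA _ j0P).
- have FsubP0 : F \subset P0 by apply/subsetP => j; rewrite inE => /andP [].
  have P0subA : P0 \subset A by apply/subsetP => j; rewrite inE => /andP [].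
  have cardP0 : #|P0| = #|F| + #|Pp| by rewrite -(cardsID F P0) (setIidPr FsubP0).
  have cardA : #|A| = #|A'| + #|P0| by rewrite -(cardsID P0 A) (setIidPr P0subA) addnC.
  have imA : f @: A \subset (f' @: A' :|: f @: F) :|: Pp.
    apply/subsetP => k /imsetP [j jA ->]; move: (cov j jA) => /or3P [jA'|jF|jP].
    + by rewrite !inE fA' // imset_f.
    + by rewrite !inE imset_f // orbT.
    + by rewrite in_setU fPp // jP orbT.
  have cU (X Y : {set 'I_N}) : #|X :|: Y| <= #|X| + #|Y| by rewrite cardsU leq_subr.
  have imF : #|f @: F| <= (F != set0).
    case: (set_0Vmem F) => [->|[k kF]]; first by rewrite imset0 cards0.
    have -> : F != set0 by apply/set0Pn; exists k.
    have sub : f @: F \subset [set f k].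
      apply/subsetP => k' /imsetP [j jF ->].
      by rewrite inE !fF // (Hgg j k).
    by rewrite (leq_trans (subset_leq_card sub)) // cards1.
  have Fex : (F != set0) <= [exists j in A, 0 < x r j].
    case: (set_0Vmem F) => [->|[k kF]]; first by rewrite eqxx.
    have := kF; rewrite inF => /and3P [kA xk _].
    have -> : [exists j in A, 0 < x r j] by apply/existsP; exists k; rewrite kA.
    by case: (F != set0).
  have cAr : \sum_(j in A) (0 < x r j) = #|P0| by rewrite sum_ind_card.
  have HPp : #|Pp| <= \sum_(i < r) \sum_(j in P0) (0 < x i j).
    apply: (@leq_trans (\sum_(i < r) \sum_(j in Pp) (0 < x i j))).
      rewrite exchange_big /= -sum1_card; apply: leq_sum => j jP.
      have := jP; rewrite inPp => /and3P [_ _ s0].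
      rewrite lt0n; move: s0; apply: contra; rewrite !sum_nat_eq0 => /forallP H.
      apply/forallP => i; apply/implyP => _; have := H i; rewrite /= eqb0 -eqn0Ngt //.
    apply: leq_sum => i _; by rewrite [X in _ <= X](big_setID F) /= leq_addl.
  have Hsplit : \sum_(i < r) (\sum_(j in A') (0 < x i j) + [exists j in A', 0 < x i j])
      + \sum_(i < r) \sum_(j in P0) (0 < x i j)
      <= \sum_(i < r) (\sum_(j in A) (0 < x i j) + [exists j in A, 0 < x i j]).
    rewrite -big_split /=; apply: leq_sum => i _.
    rewrite [X in _ <= X + _](big_setID P0) /= (setIidPr P0subA).
    have : [exists j in A', 0 < x i j] ==> [exists j in A, 0 < x i j].
      apply/implyP => /existsP [j /andP [jA' xj]]; apply/existsP; exists j.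
      by rewrite A'A.
    case: [exists j in A', 0 < x i j]; case: [exists j in A, 0 < x i j] => //= _; rewrite -/A'; lia.
  have imA' : #|f @: A| <= #|f' @: A'| + #|f @: F| + #|Pp|.
    apply: (leq_trans (subset_leq_card imA)); apply: (leq_trans (cU _ _)).
    by rewrite leq_add2r; apply: (leq_trans (cU _ _)).
  rewrite big_ord_recr /= cAr.
  have imF2 := leq_trans imF Fex; clear imF Fex.
  move: [exists j in A, 0 < x r j] imF2 => e imF2.
  set S1 := \sum_(i < r) (\sum_(j in A') _ + _) in Hf'cnt Hsplit.
  set S2 := \sum_(i < r) \sum_(j in P0) _ in HPp Hsplit.
  set S3 := \sum_(i < r) (\sum_(j in A) _ + _) in Hsplit *.
  set c1 := #|[set f' x | x in A']| in Hf'cnt imA' *.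
  set c2 := #|[set f x | x in F]| in imF2 imA' *.
  set c3 := #|[set f x | x in A]| in imA' *.
  rewrite cardA. move: (nat_of_bool e) imF2 => ee imF2.
  lia.
Qed.

Theorem mainTheorem2 (B N : nat) (a : 'I_N -> nat) (b : nat) :
  0 < B ->
  (forall i, 0 < a i /\ a i <= B) ->
  binpack_opt a B b ->
  min_ADMs N.+1 B (reduction_list a) (b + N).
Proof.
move=> B0 Ha [[P [HP Pbin Pcard]] Popt].
have Ha0 j : 0 < a j by case: (Ha j).
have HaB j : a j <= B by case: (Ha j).
have lower : forall r (t : routing),
    feasible N.+1 B (reduction_list a) r t -> b + N <= cost N.+1 r t.
  move=> r t [Hdem Hcap].
  pose x i (j : 'I_N) := t i j.+1 N.+1 false + t i j.+1 N.+1 true.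
  have HA : forall j, j \in [set: 'I_N] -> \sum_(i < r) x i j = 2 * a j.
    move=> j _; have := Hdem j.+1 N.+1 isT (ltn_ord j) (leqnn _).
    rewrite big_mkord => ->; rewrite demand_red ?ltnS ?ltn_ord //.
    rewrite (bigD1 j) //= !eqxx /= mul1n big1 ?addn0 // => j' Hj'.
    rewrite eqSS.
    have -> : (j == j' :> nat) = false.
      apply/negbTE; move: Hj'; apply: contra => /eqP E; apply/eqP; exact: ord_inj.
    by [].
  have Hload : forall i, i < r -> \sum_(j in [set: 'I_N]) x i j <= 2 * B.
    move=> i ir.
    rewrite (eq_bigl (fun _ => true)); last by move=> ?; rewrite in_setT.
    rewrite big_split /= mul2n -addnn.
    apply: leq_add.
    - case: (posnP N) => [N0|Npos].
        by rewrite big1 // => j; have := ltn_ord j; lia.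
      apply: leq_trans (Hcap i N ir Npos (leqnSn N)).
      apply: leq_trans (load_ge N t i N); apply: leq_sum => j _.
      by rewrite /arc_has_edge ltn_ord ltnSn /= addn0.
    - apply: leq_trans (Hcap i N.+1 ir isT (leqnn _)).
      apply: leq_trans (load_ge N t i N.+1); apply: leq_sum => j _.
      by rewrite /arc_has_edge ltnn andbF /=.
  have [f [_ fbin fcnt]] := pack Ha0 HA Hload (fun j _ => HaB j).
  pose Q := preim_partition f [set: 'I_N].
  have HQ := preim_partitionP f [set: 'I_N].
  have Qbin : forall S, S \in Q -> \sum_(i in S) a i <= B.
    move=> S /imsetP [j0 _ ->].
    rewrite (eq_bigl (fun j => (j \in [set: 'I_N]) && (f j == f j0))); first exact: fbin.
    by move=> j; rewrite !inE eq_sym.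
  have bQ := Popt Q HQ Qbin.
  have Qcard : #|Q| <= #|f @: [set: 'I_N]|.
    pose g (k : 'I_N) := [set y in [set: 'I_N] | k == f y].
    have -> : Q = [set (g \o f) x | x in [set: 'I_N]] by [].
    rewrite (imset_comp g f); apply: leq_imset_card.
  have costge : forall i, i < r ->
      \sum_(j in [set: 'I_N]) (0 < x i j) + [exists j in [set: 'I_N], 0 < x i j]
      <= \sum_(1 <= v < N.+2) needs_adm N.+1 t i v.
    move=> i ir; rewrite big_nat_recr //= (big_add1 _ _ 0) /= big_mkord.
    apply: leq_add.
      rewrite (eq_bigl (fun _ => true)); last by move=> ?; rewrite in_setT.
      apply: leq_sum => j _.
      case Hx: (0 < x i j) => //=; rewrite lt0b.
      apply/existsP; exists (inord j.+1); apply/existsP; exists (inord N.+1).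
      rewrite !inordK //; last by have := ltn_ord j; lia.
      apply/and4P; split => //; first exact: ltn_ord; by rewrite eqxx.
    case: existsP => // [[j /andP [_ Hx]]] /=; rewrite lt0b.
    apply/existsP; exists (inord j.+1); apply/existsP; exists (inord N.+1).
    rewrite !inordK //; last by have := ltn_ord j; lia.
    apply/and4P; split => //; first exact: ltn_ord; by rewrite eqxx orbT.
  have : N + #|f @: [set: 'I_N]| <= cost N.+1 r t.
    rewrite /cost big_mkord.
    move: fcnt; rewrite cardsT card_ord => H.
    apply: leq_trans H _; apply: leq_sum => i _; exact: costge.
  move=> H; apply: leq_trans H; rewrite addnC leq_add2l; exact: leq_trans bQ Qcard.
pose s := enum P. pose r := size s. pose S i := nth set0 s i.
have SP : forall i, i < r -> S i \in P by move=> i ir; rewrite -mem_enum mem_nth.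
case/and3P: (HP) => /eqP Pcov Ptriv P0.
have cover1 : forall j', \sum_(i < r) (j' \in S i) = 1.
  move=> j'.
  have -> : \sum_(i < r) (j' \in S i) = \sum_(S0 <- s) (j' \in S0).
    by rewrite (big_nth set0) big_mkord.
  rewrite big_enum /=.
  have jc : j' \in cover P by rewrite Pcov in_setT.
  rewrite (bigD1 (pblock P j')) /=; last exact: pblock_mem.
  rewrite mem_pblock jc big1 // => S0 /andP [S0P S0ne].
  apply/eqP; rewrite eqb0; apply: contra S0ne => jS.
  by apply/eqP; rewrite (def_pblock Ptriv S0P jS).
pose t : routing := fun i j k _ =>
  \sum_(j' < N) ((j == j'.+1) && (k == N.+1)) * (a j' * (j' \in S i)).
have Hfeas : feasible N.+1 B (reduction_list a) r t.
  split.
  - move=> j k j1 jk kn; rewrite demand_red // big_mkord.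
    rewrite (eq_bigr (fun i : 'I_r => \sum_(j' < N)
        (((j == j'.+1) && (k == N.+1)) * (a j' * (j' \in S i)) * 2))); last first.
      by move=> i _; rewrite /t -big_split /=; apply: eq_bigr => j' _; rewrite addnn -mul2n mulnC.
    rewrite exchange_big /=; apply: eq_bigr => j' _.
    rewrite -big_distrl -big_distrr -big_distrr /= cover1.
    lia.
  - move=> i l ir l1 ln.
    have Sbin := Pbin _ (SP i ir).
    apply: leq_trans Sbin.
    have -> : load N.+1 t i l = \sum_(1 <= j < N.+2) \sum_(j.+1 <= k < N.+2) t i j k false.
      apply: eq_bigr => j _; apply: eq_bigr => k _; rewrite /arc_has_edge.
      by case: (_ && _) => /=; rewrite ?addn0.
    apply: (@leq_trans (\sum_(j' < N) a j' * (j' \in S i))); last first.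
      rewrite [X in _ <= X]big_mkcond /=; apply: leq_sum => j' _.
      by case: (j' \in S i); rewrite /= ?muln1 ?muln0.
    rewrite /t.
    under eq_bigr do rewrite exchange_big /=.
    rewrite exchange_big /=.
    apply: leq_sum => j' _.
    set v := a j' * (j' \in S i).
    apply: (@leq_trans (\sum_(1 <= j < N.+2) (j == j'.+1) * v)).
      apply: leq_sum => j _.
      apply: (@leq_trans (\sum_(j.+1 <= k < N.+2) (j == j'.+1) * ((k == N.+1) * v))).
        by apply: leq_sum => k _; case: (j == j'.+1); case: (k == N.+1); rewrite /= ?mul1n ?mul0n.
      rewrite -big_distrr /= -big_distrl /=; apply: leq_mul => //.
      by rewrite -[X in _ <= X]mul1n leq_mul2r sum_eq_le1 orbT.
    by rewrite -big_distrl /= -[X in _ <= X]mul1n leq_mul2r sum_eq_le1 orbT.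
split; last exact: lower.
exists r, t; split => //.
apply/eqP; rewrite eqn_leq (lower _ _ Hfeas) andbT.
have cardS (X : {set 'I_N}) : #|X| = \sum_(v < N) (v \in X).
  by rewrite -sum1_card big_mkcond /=; apply: eq_bigr => v _; case: (v \in X).
rewrite /cost big_mkord.
apply: (@leq_trans (\sum_(i < r) (#|S i| + 1))).
  apply: leq_sum => i _.
  rewrite big_nat_recr //= (big_add1 _ _ 0) /= big_mkord.
  apply: leq_add; last exact: leq_b1.
  rewrite cardS; apply: leq_sum => v _.
  case Hn: (needs_adm N.+1 t i v.+1) => //.
  move/existsP: Hn => [jj /existsP [kk /and4P [j1 jk Hv Hpos]]].
  have Hpos' : 0 < t i jj kk false by move: Hpos; rewrite /t addnn double_gt0.
  move: Hpos'; rewrite /t lt0n sum_nat_eq0 => /forallPn [j' /=].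
  case E1: (nat_of_ord jj == j'.+1); case E2: (nat_of_ord kk == N.+1); case E3: (j' \in S i);
    rewrite /= ?muln0 ?mul0n //.
  move=> _; move/eqP: E1 => E1; move/eqP: E2 => E2.
  case/orP: Hv => /eqP Hv; last by have := ltn_ord v; lia.
  have -> : v = j' by apply: ord_inj; lia.
  by rewrite E3.
rewrite big_split /=.
have -> : \sum_(i < r) #|S i| = \sum_(S0 <- s) #|S0|.
  by rewrite (big_nth set0) big_mkord.
rewrite big_enum /= -(card_partition HP) cardsT card_ord.
rewrite sum_nat_const card_ord muln1 /r /s -cardE Pcard.
lia.
Qed.
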